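(* Let $n$ be a positive integer, $\pi\in\mathrm{NC}_B(n)$ and $\psi(\pi)=(\sigma,x)$. Write $i\sim_\pi j$ (resp. $i\sim_\sigma j$) if $i,j$ lie in the same block of $\pi$ (resp. $\sigma$), and $i\not\sim_\pi j$ otherwise. Let $i<j$ be positive integers in $[n]$ with $i\sim_\sigma j$. Then: (1) if $x=\emptyset$, then $i\sim_\pi j$ and $i\not\sim_\pi -j$; (2) if $x$ is an edge $(a,b)$ of $\sigma$, then $i\not\sim_\pi j$ and $i\sim_\pi -j$ when $i\le a<b\le j$, and $i\sim_\pi j$ and $i\not\sim_\pi -j$ otherwise; (3) if $x$ is a block $B$ of $\sigma$, then $i\sim_\pi j$ and $i\sim_\pi -j$ when $\{i,j\}\subseteq B$; $i\not\sim_\pi j$ and $i\sim_\pi -j$ when $\{i,j\}\not\subseteq B$ and $i<\min B\le\max B<j$; and $i\sim_\pi j$ and $i\not\sim_\pi -j$ otherwise.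
   Context: $[\pm n]=\{1,\dots,n,-1,\dots,-n\}$. A partition of type $B_n$ is a partition $\pi$ of $[\pm n]$ such that $-B$ is a block whenever $B$ is, with at most one block satisfying $B=-B$; it is noncrossing if, in the linear order $1<\cdots<n<-1<\cdots<-n$, there are no $a<b<c<d$ with $a,c$ in one block and $b,d$ in another. $\mathrm{NC}_B(n)$ is the set of these; $\mathrm{NC}(n)$ is the set of noncrossing partitions of $[n]$. An edge of $\sigma\in\mathrm{NC}(n)$ is a pair $(i,j)$, $i<j$, with $i,j$ in a common block containing no integer strictly between them. The map $\psi$: given $\pi\in\mathrm{NC}_B(n)$, let $\eta$ be obtained by deleting all negative integers from the blocks of $\pi$ (discarding empty sets), and let $X$ be the set of blocks $A$ of $\eta$ such that the block of $\pi$ containing $A$ also contains a negative integer. Write $X=\{A_1,\dots,A_m\}$ with $\max A_1<\cdots<\max A_m$. Let $\sigma$ be obtained from $\eta$ by merging $A_i$ and $A_{m+1-i}$ for $i=1,\dots,\lfloor m/2\rfloor$; $x=\emptyset$ if $m=0$, $x=(\max A_{m/2},\min A_{m/2+1})$ if $m>0$ is even, $x=A_{(m+1)/2}$ if $m$ is odd; $\psi(\pi)=(\sigma,x)$. *)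

(* Defs.v *)
From mathcomp Require Import all_boot.
Set Implicit Arguments. Unset Strict Implicit. Unset Printing Implicit Defensive.

(* Encoding of [±n] = {1,..,n,-1,..,-n} as the finite type 'I_(n+n):
   the positive integer k (1 <= k <= n) is  pos n (k-1) = lshift n (k-1)  (value k-1),
   the negative integer -k is              neg n (k-1) = rshift n (k-1)  (value n+k-1).
   Thus the natural order on 'I_(n+n) is exactly the linear order
   1 < ... < n < -1 < ... < -n used in the definition of noncrossing.
   Similarly [n] is encoded as 'I_n (k encoded by k-1). *)

Definition pos (n : nat) (i : 'I_n) : 'I_(n + n) := lshift n i.
Definition neg (n : nat) (i : 'I_n) : 'I_(n + n) := rshift n i.

Definition flip (n : nat) (x : 'I_(n + n)) : 'I_(n + n) :=
  match split x with inl i => neg i | inr i => pos i end.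

Definition negset (n : nat) (B : {set 'I_(n + n)}) : {set 'I_(n + n)} :=
  [set flip x | x in B].

Definition typeB_partition (n : nat) (P : {set {set 'I_(n + n)}}) : Prop :=
  [/\ partition P [set: 'I_(n + n)],
      (forall B, B \in P -> negset B \in P) &
      (forall B1 B2, B1 \in P -> B2 \in P ->
          negset B1 = B1 -> negset B2 = B2 -> B1 = B2)].

Definition noncrossing (T : finType) (le : T -> nat) (P : {set {set T}}) : Prop :=
  forall B1 B2, B1 \in P -> B2 \in P -> B1 != B2 ->
    ~ (exists a b c d : T, [/\ le a < le b, le b < le c & le c < le d] /\
          [/\ a \in B1, c \in B1, b \in B2 & d \in B2]).

Definition NCB (n : nat) (P : {set {set 'I_(n + n)}}) : Prop :=
  typeB_partition P /\ noncrossing (fun x : 'I_(n + n) => nat_of_ord x) P.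

Definition sameblock (T : finType) (P : {set {set T}}) (x y : T) : bool :=
  [exists B in P, (x \in B) && (y \in B)].

Definition smax (n : nat) (A : {set 'I_n}) : nat := \max_(i in A) (i : nat).
Definition smin (n : nat) (A : {set 'I_n}) : nat := \big[minn/n]_(i in A) (i : nat).

Inductive xval (n : nat) :=
  | XEmpty
  | XEdge of nat & nat              (* an edge (a,b), a<b, 0-based values *)
  | XBlock of {set 'I_n}.
Arguments XEmpty {n}.
Arguments XEdge {n}.
Arguments XBlock {n}.

Section Psi.
Variables (n : nat) (P : {set {set 'I_(n + n)}}).

Definition pospart (B : {set 'I_(n + n)}) : {set 'I_n} := [set i | pos i \in B].

Definition eta : {set {set 'I_n}} := [set pospart B | B in P] :\ set0.

Definition Xset : {set {set 'I_n}} :=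
  [set pospart B | B in P & [exists i, pos i \in B] && [exists i, neg i \in B]].

Definition Xseq : seq {set 'I_n} := sort (fun A B => smax A <= smax B) (enum Xset).
Definition mX : nat := size Xseq.
Definition Aof (k : nat) : {set 'I_n} := nth set0 Xseq k.

(* sigma: merge A_i with A_{m+1-i} (0-based: A_k with A_{m-1-k}) *)
Definition sigma : {set {set 'I_n}} :=
  (eta :\: Xset) :|: [set Aof k :|: Aof (mX - 1 - k) | k : 'I_mX].

Definition xpsi : xval n :=
  if mX == 0 then XEmpty
  else if ~~ odd mX then XEdge (smax (Aof (mX./2 - 1))) (smin (Aof mX./2))
  else XBlock (Aof mX./2).

End Psi.

(* Main.v *)
Require Import Defs.
From mathcomp Require Import all_boot.
From mathcomp Require Import zify.
Set Implicit Arguments. Unset Strict Implicit. Unset Printing Implicit Defensive.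

Section Basics.
Variable n : nat.

Lemma val_pos (i : 'I_n) : nat_of_ord (pos i) = i. Proof. by []. Qed.
Lemma val_neg (i : 'I_n) : nat_of_ord (neg i) = n + i. Proof. by []. Qed.

Lemma flip_pos (i : 'I_n) : flip (pos i) = neg i.
Proof. by rewrite /flip /pos -[lshift n i]/(unsplit (inl i)) unsplitK. Qed.
Lemma flip_neg (i : 'I_n) : flip (neg i) = pos i.
Proof. by rewrite /flip /neg -[rshift n i]/(unsplit (inr i)) unsplitK. Qed.
Lemma flipK : involutive (@flip n).
Proof.
move=> x; rewrite -[x]splitK; case: (split x) => i /=.
  by rewrite -/(pos i) flip_pos flip_neg.
by rewrite -/(neg i) flip_neg flip_pos.
Qed.
Lemma flip_inj : injective (@flip n). Proof. exact: (inv_inj flipK). Qed.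

Lemma mem_negset (B : {set 'I_(n+n)}) x : (flip x \in negset B) = (x \in B).
Proof. by rewrite /negset (mem_imset _ _ flip_inj). Qed.

Lemma negsetK : involutive (@negset n).
Proof.
move=> B; apply/setP => x; rewrite -[x in LHS]flipK mem_negset.
by rewrite mem_negset.
Qed.
End Basics.

Section Main.
Variables (n : nat) (P : {set {set 'I_(n + n)}}).
Hypothesis HP : NCB P.

Local Notation blk x := (pblock P x).

Lemma partP : partition P [set: 'I_(n+n)]. Proof. by case: HP => [[]]. Qed.
Lemma trivP : trivIset P. Proof. by case/and3P: partP. Qed.
Lemma coverP x : x \in cover P. Proof. by case/and3P: partP => /eqP -> . Qed.
Lemma blk_mem x : blk x \in P. Proof. exact/pblock_mem/coverP. Qed.
Lemma mem_blk x : x \in blk x. Proof. by rewrite mem_pblock coverP. Qed.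

Lemma sbE x y : sameblock P x y = (blk x == blk y).
Proof.
apply/existsP/eqP => [[B /and3P[BP xB yB]]|e].
  by rewrite (def_pblock trivP BP xB) (def_pblock trivP BP yB).
by exists (blk x); rewrite blk_mem mem_blk e mem_blk.
Qed.

Lemma sbE' x y : sameblock P x y = (y \in blk x).
Proof.
rewrite sbE; apply/eqP/idP => [->|h]; first exact: mem_blk.
by rewrite (def_pblock trivP (blk_mem x) h).
Qed.

Lemma blk_flip x : blk (flip x) = negset (blk x).
Proof.
have h: negset (blk x) \in P by case: HP => [[_ H _] _]; apply: H; apply: blk_mem.
by apply: def_pblock trivP h _; rewrite mem_negset mem_blk.
Qed.

Lemma sb_flip x y : sameblock P (flip x) (flip y) = sameblock P x y.
Proof.
rewrite !sbE !blk_flip; apply/eqP/eqP => [e|->] //.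
by rewrite -(negsetK (blk x)) e negsetK.
Qed.

Lemma noncross (a b c d : 'I_(n+n)) : a < b -> b < c -> c < d ->
  sameblock P a c -> sameblock P b d -> ~~ sameblock P a b -> False.
Proof.
move=> ab bc cd sac sbd nab; case: HP => _ /(_ (blk a) (blk b)) H.
apply: H; rewrite ?blk_mem //; first by rewrite -sbE.
exists a, b, c, d; split; first by split.
by rewrite !mem_blk -!sbE' sac sbd.
Qed.

Definition sp (i j : 'I_n) := sameblock P (pos i) (pos j).
Definition sn (i j : 'I_n) := sameblock P (pos i) (neg j).

Lemma sb_refl x : sameblock P x x. Proof. by rewrite sbE. Qed.
Lemma sb_sym x y : sameblock P x y = sameblock P y x.
Proof. by rewrite !sbE eq_sym. Qed.
Lemma sb_trans x y z : sameblock P x y -> sameblock P y z -> sameblock P x z.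
Proof. by rewrite !sbE => /eqP -> . Qed.

Lemma sp_refl i : sp i i. Proof. exact: sb_refl. Qed.
Lemma sp_sym i j : sp i j = sp j i. Proof. exact: sb_sym. Qed.
Lemma sp_trans i j k : sp i j -> sp j k -> sp i k. Proof. exact: sb_trans. Qed.
Lemma sn_sym i j : sn i j = sn j i.
Proof. by rewrite /sn -sb_flip flip_pos flip_neg sb_sym. Qed.
Lemma sn_sp i j k : sn i j -> sn i k -> sp j k.
Proof.
rewrite /sn /sp -[sameblock _ (pos j) _]sb_flip !flip_pos => h1 h2.
by apply: sb_trans h2; rewrite sb_sym.
Qed.
Lemma sp_sn i j k : sp i j -> sn j k -> sn i k.
Proof. exact: sb_trans. Qed.

Lemma G (y x z w : 'I_n) : y < x -> x < z -> sp y z -> ~~ sp y x -> sn x w -> False.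
Proof.
move=> yx xz syz nyx sxw.
apply: (noncross (a:=pos y) (b:=pos x) (c:=pos z) (d:=neg w)) => //.
by rewrite val_neg; apply: leq_trans (ltn_ord z) (leq_addr _ _).
Qed.

Definition R (i : 'I_n) := pospart (blk (pos i)).
Definition mixed (i : 'I_n) := [exists j, sn i j].
Definition phi (A : {set 'I_n}) := [set j | [exists i in A, sn i j]].
Local Notation X := (Xset P).

Lemma memR i j : (j \in R i) = sp i j.
Proof. by rewrite /R /pospart inE /sp sbE'. Qed.

Lemma R_eq i j : sp i j -> R i = R j.
Proof. by move=> h; apply/setP => k; rewrite !memR; apply/idP/idP; apply: sp_trans; rewrite // sp_sym. Qed.

Lemma XsetP A : A \in X -> exists i, A = R i /\ mixed i.
Proof.
case/imsetP => B; rewrite inE => /andP[BP /andP[/existsP[i iB] /existsP[j jB]]] ->.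
have e : B = blk (pos i) by rewrite (def_pblock trivP BP iB).
exists i; split; first by rewrite /R -e.
by apply/existsP; exists j; rewrite /sn sbE' -e.
Qed.

Lemma R_X i : mixed i -> R i \in X.
Proof.
case/existsP => j hj; apply/imsetP; exists (blk (pos i)) => //.
rewrite inE blk_mem /=; apply/andP; split; apply/existsP.
  by exists i; exact: mem_blk.
by exists j; rewrite -sbE'.
Qed.

Lemma Xmem A x : A \in X -> x \in A -> A = R x /\ mixed x.
Proof.
case/XsetP => i [-> /existsP[w hw]]; rewrite memR => hx; split; first exact: R_eq.
by apply/existsP; exists w; apply: sp_sn hw; rewrite sp_sym.
Qed.

Lemma Xdisj A B x : A \in X -> B \in X -> x \in A -> x \in B -> A = B.
Proof. by move=> AX BX xA xB; rewrite (Xmem AX xA).1 (Xmem BX xB).1. Qed.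

Lemma X_notsp A B x y : A \in X -> B \in X -> A != B -> x \in A -> y \in B -> ~~ sp x y.
Proof.
move=> AX BX AB xA yB; apply/negP => sxy; move/negP: AB; apply; apply/eqP.
by apply: (@Xdisj A B y AX BX) => //; rewrite (Xmem AX xA).1 memR.
Qed.

Lemma X_ne A : A \in X -> 0 < #|A|.
Proof. by case/XsetP => i [-> _]; apply/card_gt0P; exists i; rewrite memR sp_refl. Qed.

Lemma phi_mem A x y : A \in X -> x \in A -> (y \in phi A) = sn x y.
Proof.
move=> AX xA; rewrite inE; apply/existsP/idP => [[z /andP[zA hz]]|h].
  have e := (Xmem AX xA).1; rewrite e memR in zA; exact: sp_sn zA hz.
by exists x; rewrite xA.
Qed.

Lemma phiX A : A \in X -> phi A \in X /\ phi (phi A) = A.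
Proof.
move=> AX; case/XsetP: (AX) => i [eA /existsP[j hj]].
have iA : i \in A by rewrite eA memR sp_refl.
have e : phi A = R j.
  apply/setP => k; rewrite (phi_mem k AX iA) memR.
  apply/idP/idP => h; first exact: sn_sp hj h.
  by rewrite sn_sym; apply: (@sp_sn k j i); [rewrite sp_sym | rewrite sn_sym].
have mj : mixed j by apply/existsP; exists i; rewrite sn_sym.
split; first by rewrite e; exact: R_X.
have jX : R j \in X by exact: R_X.
apply/setP => k; rewrite e (@phi_mem _ j k jX) ?memR ?sp_refl //.
rewrite eA memR; apply/idP/idP => h.
  by apply: (@sn_sp j i k) h; rewrite sn_sym.
by rewrite sn_sym; apply: (@sp_sn k i j) hj; rewrite sp_sym.
Qed.

Lemma smax_mem (A : {set 'I_n}) : 0 < #|A| -> exists2 x, x \in A & smax A = x.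
Proof. by move=> h; case: (eq_bigmax_cond (fun i : 'I_n => (i : nat)) h) => x xA e; exists x. Qed.
Lemma le_smax (A : {set 'I_n}) x : x \in A -> x <= smax A.
Proof. by move=> xA; rewrite /smax (bigD1 x) //= leq_maxl. Qed.
Lemma smin_le (A : {set 'I_n}) x : x \in A -> smin A <= x.
Proof.
move=> xA; rewrite /smin -big_filter.
have : x \in [seq i <- index_enum 'I_n | i \in A] by rewrite mem_filter xA mem_index_enum.
elim: [seq i <- index_enum 'I_n | i \in A] => // y s IH.
rewrite inE big_cons => /orP[/eqP->|/IH h]; first exact: geq_minl.
exact: leq_trans (geq_minr _ _) h.
Qed.
Lemma smin_mem (A : {set 'I_n}) : 0 < #|A| -> exists2 x, x \in A & smin A = x.
Proof.
case/card_gt0P => x0 x0A.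
have : smin A = n \/ exists2 x, x \in A & smin A = x.
  rewrite /smin; apply: (big_ind (fun v => v = n \/ exists2 x, x \in A & v = x)) => //.
  - by left.
  - by move=> u v hu hv /=; case: (leqP u v).
  - by move=> i iA; right; exists i.
case=> // e; have := smin_le x0A; rewrite e => h.
by have := ltn_ord x0; rewrite ltnNge h.
Qed.

Lemma H A B : A \in X -> B \in X -> smax A < smax B -> smax (phi B) < smax (phi A).
Proof.
move=> AX BX ab.
have [a aA ea] := smax_mem (X_ne AX); have [b bB eb] := smax_mem (X_ne BX).
have [pAX _] := phiX AX; have [pBX _] := phiX BX.
have [a' a'A ea'] := smax_mem (X_ne pAX); have [b' b'B eb'] := smax_mem (X_ne pBX).
rewrite (phi_mem a' AX aA) in a'A; rewrite (phi_mem b' BX bB) in b'B.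
have AB : A != B by apply/eqP => e; rewrite e ltnn in ab.
have nab := X_notsp AX BX AB aA bB.
rewrite ea' eb' ltnNge; apply/negP => h.
case: (ltngtP a' b') h => // [lt|eq] _.
  apply: (noncross (a := pos a) (b := pos b) (c := neg a') (d := neg b')) => //.
  - by rewrite !val_pos -ea -eb.
  - by rewrite val_neg; apply: leq_trans (ltn_ord b) (leq_addr _ _).
  - by rewrite !val_neg ltn_add2l.
have e : a' = b' by apply: val_inj.
by move/negP: nab; apply; apply: (@sn_sp a' a b); rewrite sn_sym // e.
Qed.

Lemma K A B x y : A \in X -> B \in X -> smax A < smax B -> x \in A -> y \in B -> x < y.
Proof.
move=> AX BX ab xA yB.
have AB : A != B by apply/eqP => e; rewrite e ltnn in ab.
have [M MB eM] := smax_mem (X_ne BX).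
rewrite ltnNge; apply/negP => yx.
have nyx : ~~ sp y x by rewrite sp_sym; exact: X_notsp AX BX AB xA yB.
have {}yx : y < x.
  rewrite ltn_neqAle yx andbT; apply/eqP => e.
  have e' : y = x := val_inj e; by rewrite e' sp_refl in nyx.
have [_ /existsP[w hw]] := Xmem AX xA.
apply: (@G y x M w yx _ _ nyx hw).
  by apply: leq_ltn_trans (le_smax xA) _; rewrite -eM.
by rewrite -memR -(Xmem BX yB).1.
Qed.

Local Notation s := (Xseq P).
Local Notation m := (mX P).
Local Notation A_ k := (Aof P k).
Definition leS (A B : {set 'I_n}) := smax A <= smax B.

Lemma s_mem A : (A \in s) = (A \in X). Proof. by rewrite /Xseq mem_sort mem_enum. Qed.
Lemma s_uniq : uniq s. Proof. by rewrite /Xseq sort_uniq enum_uniq. Qed.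
Lemma s_sorted : sorted leS s.
Proof. by apply: sort_sorted => A B; exact: leq_total. Qed.
Lemma size_s : size s = m. Proof. by []. Qed.

Lemma AX k : k < m -> A_ k \in X.
Proof. by move=> h; rewrite -s_mem /Aof mem_nth. Qed.

Lemma smax_inj A B : A \in X -> B \in X -> smax A = smax B -> A = B.
Proof.
move=> AX BX e.
have [a aA ea] := smax_mem (X_ne AX); have [b bB eb] := smax_mem (X_ne BX).
have ab : a = b by apply: val_inj; rewrite /= -ea -eb.
by apply: (@Xdisj A B a) => //; rewrite ab.
Qed.

Lemma A_lt k l : k < l -> l < m -> smax (A_ k) < smax (A_ l).
Proof.
move=> kl lm; have km : k < m := ltn_trans kl lm.
have h : smax (A_ k) <= smax (A_ l).
  have trS : transitive leS by move=> B A C; exact: leq_trans.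
  by apply: (sorted_ltn_nth trS set0 s_sorted).
rewrite ltn_neqAle h andbT; apply/eqP => e.
have := smax_inj (AX km) (AX lm) e; rewrite /Aof => /eqP.
by rewrite nth_uniq ?s_uniq // => /eqP ekl; rewrite ekl ltnn in kl.
Qed.

Lemma A_le k l : k <= l -> l < m -> smax (A_ k) <= smax (A_ l).
Proof.
rewrite leq_eqVlt => /orP[/eqP -> //|kl lm]; exact: ltnW (A_lt kl lm).
Qed.

Lemma phi_inj : {in X &, injective phi}.
Proof.
by move=> A B AX BX e; rewrite -(phiX AX).2 -(phiX BX).2 e.
Qed.

Lemma s_rev : s = rev (map phi s).
Proof.
apply: (@sorted_eq_in _ leS).
- by move=> x y z _ _ _; exact: leq_trans.
- move=> A B; rewrite !s_mem => AX BX /= /andP[h1 h2].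
  by apply: smax_inj AX BX _; apply/eqP; rewrite eqn_leq -!/(leS _ _) h1 h2.
- exact: s_sorted.
- rewrite rev_sorted.
  apply: (homo_sorted_in (P := [in X])); last exact: s_sorted.
    move=> A B AX BX; rewrite /leS leq_eqVlt => /orP[/eqP e|lt].
      by rewrite (smax_inj AX BX e).
    exact: ltnW (H AX BX lt).
  by apply/allP => A; rewrite s_mem.
- apply: uniq_perm; first exact: s_uniq.
    rewrite rev_uniq map_inj_in_uniq ?s_uniq //.
    by move=> A B; rewrite !s_mem; exact: phi_inj.
  move=> A; rewrite mem_rev; apply/idP/mapP => [|[B]].
    rewrite s_mem => AX; exists (phi A); last by rewrite (phiX AX).2.
    by rewrite s_mem (phiX AX).1.
  by rewrite s_mem => BX ->; rewrite s_mem (phiX BX).1.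
Qed.

Lemma A_rev k : k < m -> A_ (m - 1 - k) = phi (A_ k).
Proof.
move=> km.
have e : A_ k = phi (A_ (m - 1 - k)).
  rewrite /Aof {1}s_rev nth_rev size_map // (nth_map set0); last first.
    by move: km; rewrite /mX; lia.
  by congr (phi (nth _ _ _)); move: km; rewrite /mX; lia.
have hm : m - 1 - k < m by move: km; rewrite /mX; lia.
by rewrite e (phiX (AX hm)).2.
Qed.

Lemma Gx U (x y z : 'I_n) : U \in X -> x \in U -> y < x -> x < z -> sp y z -> ~~ sp y x -> False.
Proof.
move=> UX xU yx xz syz nyx; have [_ /existsP[w hw]] := Xmem UX xU.
exact: (@G y x z w yx xz syz nyx hw).
Qed.

Lemma nm_notsp i U x : ~~ mixed i -> U \in X -> x \in U -> ~~ sp i x.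
Proof.
move=> nm UX xU; apply/negP => h; move/negP: nm; apply.
have [_ /existsP[w hw]] := Xmem UX xU.
by apply/existsP; exists w; exact: sp_sn h hw.
Qed.

Lemma nm_notin i U : ~~ mixed i -> U \in X -> i \notin U.
Proof. by move=> nm UX; apply/negP => iU; move/negP: (nm_notsp nm UX iU); apply; exact: sp_refl. Qed.

Lemma caseAB i j : sameblock (sigma P) i j ->
  (sp i j /\ ~~ mixed i) \/
  exists t, [/\ t < m, i \in A_ t & (j \in A_ t) || (j \in A_ (m - 1 - t))].
Proof.
case/existsP => S /and3P[]; rewrite /sigma inE => /orP[].
  rewrite inE => /andP[SnX]; rewrite /eta inE => /andP[_ /imsetP[B0 B0P eS]] iS jS.
  have e : B0 = blk (pos i).
    by rewrite (def_pblock trivP B0P) //; move: iS; rewrite eS inE.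
  rewrite e -/(R i) in eS.
  left; split; first by rewrite -memR -eS.
  by apply/negP => mi; move/negP: SnX; apply; rewrite eS; exact: R_X.
case/imsetP => k _ -> ; rewrite !inE => /orP[ik|ik] jS; right.
  by exists k; rewrite ik jS.
exists (m - 1 - k); split => //.
  by move: (ltn_ord k); rewrite /mX; lia.
have -> : m - 1 - (m - 1 - k) = k by move: (ltn_ord k); rewrite /mX; lia.
by rewrite orbC.
Qed.

Lemma inB t y i : t < m -> i \in A_ t ->
  ((y \in A_ t) = sp i y) /\ ((y \in A_ (m - 1 - t)) = sn i y).
Proof.
move=> tm it; split; first by rewrite (Xmem (AX tm) it).1 memR.
by rewrite A_rev // (phi_mem y (AX tm) it).
Qed.

Lemma A_uniq k l : k < m -> l < m -> A_ k = A_ l -> k = l.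
Proof. by move=> km lm; rewrite /Aof => /eqP; rewrite nth_uniq ?s_uniq // => /eqP. Qed.

Lemma t_lt (i j : 'I_n) t : i < j -> t < m -> i \in A_ t -> j \in A_ (m - 1 - t) ->
  A_ t != A_ (m - 1 - t) -> t < m - 1 - t.
Proof.
move=> ij tm it jt ne.
have t'm : m - 1 - t < m by move: tm; rewrite /mX; lia.
case: (ltngtP t (m - 1 - t)) => // [lt|eq]; last by rewrite -eq eqxx in ne.
have := K (AX t'm) (AX tm) (A_lt lt tm) jt it.
by rewrite ltnNge (ltnW ij).
Qed.

Lemma res_empty i j : sameblock (sigma P) i j -> m = 0 -> sp i j /\ ~~ sn i j.
Proof.
move=> sij m0; case: (caseAB sij) => [[sp' nm]|[t [tm _ _]]]; last by rewrite m0 in tm.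
split => //; apply/negP => h; move/negP: nm; apply; by apply/existsP; exists j.
Qed.

Lemma Xne_set k l : k < m -> l < m -> k != l -> A_ k != A_ l.
Proof. by move=> km lm kl; apply/eqP => e; move/eqP: kl; apply; exact: A_uniq e. Qed.

Lemma res_edge (i j : 'I_n) : i < j -> sameblock (sigma P) i j -> 0 < m -> ~~ odd m ->
  if (i <= smax (A_ (m./2 - 1))) && (smax (A_ (m./2 - 1)) < smin (A_ m./2)) && (smin (A_ m./2) <= j)
  then ~~ sp i j /\ sn i j else sp i j /\ ~~ sn i j.
Proof.
move=> ij sij m0 ev.
have mh : m = m./2 + m./2.
  by have := odd_double_half m; rewrite (negbTE ev) add0n -addnn.
set h := m./2 in mh *.
have h1m : h - 1 < m by lia.
have hm : h < m by lia.
have h1h : h - 1 < h by lia.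
have [xa xaA ea] := smax_mem (X_ne (AX h1m)).
have [xb xbB eb] := smin_mem (X_ne (AX hm)).
have xab : xa < xb := K (AX h1m) (AX hm) (A_lt h1h hm) xaA xbB.
rewrite ea eb.
case: (caseAB sij) => [[sij' nm]|[t [tm it jor]]].
  case: ifP => [/andP[/andP[ia _] bj]|_]; last first.
    by split => //; apply/negP => h'; move/negP: nm; apply; apply/existsP; exists j.
  exfalso; have nx := nm_notsp nm (AX h1m) xaA.
  have ixa : i < xa.
    rewrite ltn_neqAle ia andbT; apply/eqP => e.
    by have e' : i = xa := val_inj e; rewrite e' sp_refl in nx.
  exact: (Gx (AX h1m) xaA ixa (leq_trans xab bj) sij' nx).
have t'm : m - 1 - t < m by lia.
have [e1 e2] := inB j tm it.
case jt: (j \in A_ t); case jt': (j \in A_ (m - 1 - t)); rewrite jt jt' /= in jor => //.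
- have e := Xdisj (AX tm) (AX t'm) jt jt'.
  have := A_uniq tm t'm e; lia.
- have sij' : sp i j by rewrite -e1.
  case: ifP => [/andP[/andP[ia _] bj]|_]; last by rewrite -e1 -e2 jt jt'.
  exfalso.
  case: (eqVneq (A_ t) (A_ (h - 1))) => [eth|neth].
    have neb : A_ t != A_ h by rewrite eth; apply: Xne_set => //; lia.
    have nx := X_notsp (AX tm) (AX hm) neb it xbB.
    have xbj : xb < j.
      rewrite ltn_neqAle bj andbT; apply/eqP => e.
      by have e' : xb = j := val_inj e; rewrite e' sij' in nx.
    exact: (Gx (AX hm) xbB (leq_ltn_trans ia xab) xbj sij' nx).
  have nx := X_notsp (AX tm) (AX h1m) neth it xaA.
  have ixa : i < xa.
    rewrite ltn_neqAle ia andbT; apply/eqP => e.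
    by have e' : i = xa := val_inj e; rewrite e' sp_refl in nx.
  exact: (Gx (AX h1m) xaA ixa (leq_trans xab bj) sij' nx).
- have ne : A_ t != A_ (m - 1 - t) by apply/eqP => e; rewrite e jt' in jt.
  have tt := t_lt ij tm it jt' ne.
  rewrite -e1 -e2 jt jt' /=.
  have -> : (i <= xa) && (xa < xb) && (xb <= j).
    rewrite xab andbT; apply/andP; split.
      rewrite -ea; apply: leq_trans (le_smax it) _; apply: A_le => //; lia.
    case: (eqVneq (m - 1 - t) h) => [eh|neh].
      by rewrite -eb; apply: smin_le; rewrite -eh.
    have ht : h < m - 1 - t by lia.
    exact: ltnW (K (AX hm) (AX t'm) (A_lt ht t'm) xbB jt').
  by [].
Qed.

Lemma res_block (i j : 'I_n) : i < j -> sameblock (sigma P) i j -> odd m ->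
  if (i \in A_ m./2) && (j \in A_ m./2)
  then sp i j /\ sn i j
  else if (i < smin (A_ m./2)) && (smax (A_ m./2) < j)
  then ~~ sp i j /\ sn i j
  else sp i j /\ ~~ sn i j.
Proof.
move=> ij sij od.
have mh : m = (m./2 + m./2).+1.
  by have := odd_double_half m; rewrite od -addnn add1n.
set h := m./2 in mh *.
have hm : h < m by lia.
have [xm xmB em] := smin_mem (X_ne (AX hm)).
have [xM xMB eM] := smax_mem (X_ne (AX hm)).
rewrite em eM.
have xmM : xm <= xM by rewrite -em; exact: smin_le.
case: (caseAB sij) => [[sij' nm]|[t [tm it jor]]].
  rewrite (negbTE (nm_notin nm (AX hm))) /=.
  case: ifP => [/andP[ixm Mj]|_]; last first.
    by split => //; apply/negP => h'; move/negP: nm; apply; apply/existsP; exists j.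
  exfalso; exact: (Gx (AX hm) xmB ixm (leq_ltn_trans xmM Mj) sij' (nm_notsp nm (AX hm) xmB)).
have t'm : m - 1 - t < m by lia.
have [e1 e2] := inB j tm it.
case jt: (j \in A_ t); case jt': (j \in A_ (m - 1 - t)); rewrite jt jt' /= in jor => //.
- have e := Xdisj (AX tm) (AX t'm) jt jt'.
  have eth : t = h by have := A_uniq tm t'm e; lia.
  rewrite -eth it jt /=; by rewrite -e1 -e2.
- have nth' : t != h.
    by apply/eqP => eth; rewrite eth in jt jt'; move: jt'; rewrite (_ : m - 1 - h = h) ?jt //; lia.
  have ne := Xne_set tm hm nth'.
  have iB : i \notin A_ h by apply/negP => iB; move/negP: ne; apply; apply/eqP; exact: Xdisj (AX tm) (AX hm) it iB.
  rewrite (negbTE iB) /=.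
  case: ifP => [/andP[ixm Mj]|_]; last by rewrite -e1 -e2 jt jt'.
  exfalso; have sij' : sp i j by rewrite -e1.
  exact: (Gx (AX hm) xmB ixm (leq_ltn_trans xmM Mj) sij' (X_notsp (AX tm) (AX hm) ne it xmB)).
- have nth' : t != h.
    by apply/eqP => eth; rewrite eth in jt jt'; move: jt'; rewrite (_ : m - 1 - h = h) ?jt //; lia.
  have ne := Xne_set tm hm nth'.
  have iB : i \notin A_ h by apply/negP => iB; move/negP: ne; apply; apply/eqP; exact: Xdisj (AX tm) (AX hm) it iB.
  rewrite (negbTE iB) /=.
  have ne' : A_ t != A_ (m - 1 - t) by apply/eqP => e; rewrite e jt' in jt.
  have tt := t_lt ij tm it jt' ne'.
  have th : t < h by move/eqP: nth'; lia.
  have ht : h < m - 1 - t by lia.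
  rewrite (K (AX tm) (AX hm) (A_lt th hm) it xmB) (K (AX hm) (AX t'm) (A_lt ht t'm) xMB jt') /=.
  by rewrite -e1 -e2 jt jt'.
Qed.
End Main.


Theorem lemma3p3 (n : nat) (P : {set {set 'I_(n + n)}}) :
  0 < n -> NCB P ->
  forall i j : 'I_n, i < j -> sameblock (sigma P) i j ->
  [/\ xpsi P = XEmpty ->
        sameblock P (pos i) (pos j) /\ ~~ sameblock P (pos i) (neg j),
      (forall a b : nat, xpsi P = XEdge a b ->
        if (i <= a) && (a < b) && (b <= j)
        then ~~ sameblock P (pos i) (pos j) /\ sameblock P (pos i) (neg j)
        else sameblock P (pos i) (pos j) /\ ~~ sameblock P (pos i) (neg j)) &
      (forall B : {set 'I_n}, xpsi P = XBlock B ->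
        if (i \in B) && (j \in B)
        then sameblock P (pos i) (pos j) /\ sameblock P (pos i) (neg j)
        else if (i < smin B) && (smax B < j)
        then ~~ sameblock P (pos i) (pos j) /\ sameblock P (pos i) (neg j)
        else sameblock P (pos i) (pos j) /\ ~~ sameblock P (pos i) (neg j))].
Proof.
move=> n0 HP i j ij sij; split.
- rewrite /xpsi; case: ifP => [/eqP m0 _|_]; last by case: ifP.
  exact: (res_empty HP sij m0).
- move=> a b; rewrite /xpsi; case: ifP => // /negbT m0; case: ifP => // ev [<- <-].
  by apply: (res_edge HP ij sij _ ev); rewrite lt0n.
- move=> B; rewrite /xpsi; case: ifP => // _; case: ifP => // ev [<-].
  exact: (res_block HP ij sij (negbFE ev)).
Qed.
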